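(* There exist a common knowledge debate game, a common knowledge distinguishing debate game, and a private information distinguishing debate game each of which has the following property: the minimum error over all policies is strictly less than the minimum error over policies under which the agents use pure strategies in equilibrium.
   Context: Let $\delta$ be a special default action. CKDG: a tuple $(A_1,A_2,S,P,C_1,C_2,u)$ consisting of finite sets $A_i\not\ni\delta$, a finite set $S$, a probability mass function $P$ on $S$, maps $C_i:S\to\mathcal P(A_i)$, and $u:\{1,2\}\times S\to\mathbb R$. A policy is $M:\{1,2\}\times(A_1\cup\{\delta\})\times(A_2\cup\{\delta\})\to[0,1]$ with $M(1,\cdot,\cdot)+M(2,\cdot,\cdot)=1$. For each scenario $s$ the agents play the zero-sum game with payoff matrices $M(i,\cdot,\cdot)$, with agent 1 restricted to $C_1(s)\cup\{\delta\}$ and agent 2 to $C_2(s)\cup\{\delta\}$; $w^i_M(s)$ is its value to agent $i$. The error is $\mathbb E_{s\sim P}[\,|u(1,s)-u(2,s)|w^1_M(s)$ if $u(1,s)\le u(2,s)$, else $|u(1,s)-u(2,s)|w^2_M(s)\,]$. The agents use pure strategies in equilibrium under $M$ if every scenario's game has a pure-strategy Nash equilibrium. CKDDG: a tuple $(A,S,P,C_w,C_l)$ with $A$ finite, $\delta\notin A$, $S$ finite, $P$ a probability mass function on $S$, and $C_w,C_l:S\to\mathcal P(A)$. Policies, error and pure-strategy equilibria are those of the induced CKDG $(A,A,\{1,2\}\times S,P',C'_1,C'_2,u')$, where: - $P'((i,s))=P(s)/2$; - $C'_j((i,s))=C_w(s)$ if $i=j$, else $C_l(s)$; - $u'(j,(i,s))=[i=j]$.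 PIDDG: a tuple of the same form. A policy is $M:\{1,2\}\times(A\cup\{\delta\})^2\to[0,1]$ with $M(1,\cdot,\cdot)+M(2,\cdot,\cdot)=1$. $G_1(B,M)$ is the following Bayesian game. Each agent has action set $A\cup\{\delta\}$. A scenario $s\sim P$ is drawn, and agent 1's type is $C_w(s)$ while agent 2's is $C_l(s)$. Payoffs are as follows: - if both agents play available actions, agent $i$ gets $M(i,a_1,a_2)$; - if exactly one plays an unavailable action, it gets $0$ and the other gets $1$; - if both play unavailable actions, each gets $1/2$. $G_2(B,M)$ swaps the types. The error is $\frac{v_1(G_2(B,M))+v_2(G_1(B,M))}{2}$, where $v_i$ is the value of the zero-sum Bayesian game to agent $i$. The agents use pure strategies in equilibrium if $G_1(B,M)$ and $G_2(B,M)$ each have a pure-strategy (type-contingent) equilibrium. *)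

(* Defs.v *)
From HB Require Import structures.
From mathcomp Require Import all_boot all_order all_algebra.
From mathcomp Require Import classical_sets reals.
Set Implicit Arguments. Unset Strict Implicit. Unset Printing Implicit Defensive.
Import Order.TTheory GRing.Theory Num.Theory.
Local Open Scope ring_scope.
Local Open Scope classical_set_scope.

(* Conventions: agents {1,2} are represented by 'I_2, agent 1 = index 0,
   agent 2 = index 1.  The default action delta is [None] in [option A],
   a real action a is [Some a] (so delta is not in A by construction). *)

Section Defs.
Variable R : realType.

Definition agent1 : 'I_2 := ord0.
Definition agent2 : 'I_2 := ord_max.

Definition is_pmf (T : finType) (P : T -> R) : Prop :=
  (forall t, 0 <= P t) /\ \sum_(t : T) P t = 1.

Definition mixed (T : finType) (av : pred T) : set (T -> R) :=
  [set x | (forall t, 0 <= x t) /\ (forall t, ~~ av t -> x t = 0)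
           /\ \sum_(t : T) x t = 1].

Definition exp_pay (T1 T2 : finType) (g : T1 -> T2 -> R)
  (x : T1 -> R) (y : T2 -> R) : R :=
  \sum_(a : T1) \sum_(b : T2) x a * y b * g a b.

Definition value1 (T1 T2 : finType) (g1 : T1 -> T2 -> R)
  (av1 : pred T1) (av2 : pred T2) : R :=
  sup [set inf [set exp_pay g1 x y | y in mixed av2] | x in mixed av1].

Definition value2 (T1 T2 : finType) (g2 : T1 -> T2 -> R)
  (av1 : pred T1) (av2 : pred T2) : R :=
  sup [set inf [set exp_pay g2 x y | x in mixed av1] | y in mixed av2].

Definition has_pure_NE (T1 T2 : finType) (g1 g2 : T1 -> T2 -> R)
  (av1 : pred T1) (av2 : pred T2) : Prop :=
  exists a b, [/\ av1 a, av2 b,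
    (forall a', av1 a' -> g1 a' b <= g1 a b) &
    (forall b', av2 b' -> g2 a b' <= g2 a b)].

Definition avail (A : finType) (C : {set A}) : pred (option A) :=
  fun t => match t with None => true | Some a => a \in C end.

Definition is_policy (A1 A2 : finType)
  (M : 'I_2 -> option A1 -> option A2 -> R) : Prop :=
  (forall i a b, 0 <= M i a b <= 1) /\
  (forall a b, M agent1 a b + M agent2 a b = 1).

(* "min over all policies of err  <  min over pure-equilibrium policies of err",
   stated as a strict gap between the two infima *)
Definition min_err_strictly_below_pure (Pol : Type) (isPol isPure : Pol -> Prop)
  (err : Pol -> R) : Prop :=
  exists M, isPol M /\ exists c, err M < c /\
    forall M', isPol M' -> isPure M' -> c <= err M'.

Unset Implicit Arguments.
Record CKDG := mkCKDG {
  ck_A1 : finType; ck_A2 : finType; ck_S : finType;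
  ck_P : ck_S -> R;
  ck_C1 : ck_S -> {set ck_A1};
  ck_C2 : ck_S -> {set ck_A2};
  ck_u : 'I_2 -> ck_S -> R }.
Set Implicit Arguments.

Definition ckdg_wf (G : CKDG) : Prop := is_pmf (ck_P G).

Definition ckdg_policy (G : CKDG) :=
  'I_2 -> option (ck_A1 G) -> option (ck_A2 G) -> R.

Definition ckdg_w1 (G : CKDG) (M : ckdg_policy G) (s : ck_S G) : R :=
  value1 (M agent1) (avail (ck_C1 G s)) (avail (ck_C2 G s)).
Definition ckdg_w2 (G : CKDG) (M : ckdg_policy G) (s : ck_S G) : R :=
  value2 (M agent2) (avail (ck_C1 G s)) (avail (ck_C2 G s)).

Definition ckdg_error (G : CKDG) (M : ckdg_policy G) : R :=
  \sum_(s : ck_S G) ck_P G s *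
    (if ck_u G agent1 s <= ck_u G agent2 s
     then `|ck_u G agent1 s - ck_u G agent2 s| * ckdg_w1 M s
     else `|ck_u G agent1 s - ck_u G agent2 s| * ckdg_w2 M s).

Definition ckdg_pure (G : CKDG) (M : ckdg_policy G) : Prop :=
  forall s : ck_S G, has_pure_NE (M agent1) (M agent2)
                       (avail (ck_C1 G s)) (avail (ck_C2 G s)).

Unset Implicit Arguments.
Record DDG := mkDDG {
  dd_A : finType; dd_S : finType;
  dd_P : dd_S -> R;
  dd_Cw : dd_S -> {set dd_A};
  dd_Cl : dd_S -> {set dd_A} }.
Set Implicit Arguments.

Definition ddg_wf (G : DDG) : Prop := is_pmf (dd_P G).

Definition ddg_policy (G : DDG) :=
  'I_2 -> option (dd_A G) -> option (dd_A G) -> R.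

Definition ckddg_induced (G : DDG) : CKDG :=
  @mkCKDG (dd_A G) (dd_A G) ('I_2 * dd_S G)%type
    (fun p => dd_P G p.2 / 2)
    (fun p => if p.1 == agent1 then dd_Cw G p.2 else dd_Cl G p.2)
    (fun p => if p.1 == agent2 then dd_Cw G p.2 else dd_Cl G p.2)
    (fun j p => if p.1 == j then 1 else 0).

Definition ckddg_error (G : DDG) (M : ddg_policy G) : R :=
  @ckdg_error (ckddg_induced G) M.
Definition ckddg_pure (G : DDG) (M : ddg_policy G) : Prop :=
  @ckdg_pure (ckddg_induced G) M.

(* PIDDG: Bayesian games G_1, G_2.  Types of the agents are given by
   t1 t2 : S -> {set A}; a (type-contingent) strategy maps a type to a
   mixed strategy over all of A ∪ {δ}. *)
Definition pid_pay (G : DDG) (M : ddg_policy G) (i : 'I_2)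
  (T1 T2 : {set dd_A G}) (a1 a2 : option (dd_A G)) : R :=
  let ok1 := avail T1 a1 in let ok2 := avail T2 a2 in
  if ok1 && ok2 then M i a1 a2
  else if ok1 && ~~ ok2 then (if i == agent1 then 1 else 0)
  else if ~~ ok1 && ok2 then (if i == agent1 then 0 else 1)
  else 1 / 2.

Definition pid_strategies (G : DDG) : set ({set dd_A G} -> option (dd_A G) -> R) :=
  [set sg | forall T, mixed predT (sg T)].

Definition pid_U (G : DDG) (M : ddg_policy G) (i : 'I_2)
  (t1 t2 : dd_S G -> {set dd_A G})
  (sg1 sg2 : {set dd_A G} -> option (dd_A G) -> R) : R :=
  \sum_(s : dd_S G) dd_P G s *
    \sum_(a1 : option (dd_A G)) \sum_(a2 : option (dd_A G))
      sg1 (t1 s) a1 * sg2 (t2 s) a2 * pid_pay M i (t1 s) (t2 s) a1 a2.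

Definition pid_v1 (G : DDG) (M : ddg_policy G) (t1 t2 : dd_S G -> {set dd_A G}) : R :=
  sup [set inf [set pid_U M agent1 t1 t2 sg1 sg2 | sg2 in @pid_strategies G]
      | sg1 in @pid_strategies G].
Definition pid_v2 (G : DDG) (M : ddg_policy G) (t1 t2 : dd_S G -> {set dd_A G}) : R :=
  sup [set inf [set pid_U M agent2 t1 t2 sg1 sg2 | sg1 in @pid_strategies G]
      | sg2 in @pid_strategies G].

(* G_1: agent 1 has type C_w(s), agent 2 has type C_l(s); G_2 swaps them *)
Definition piddg_error (G : DDG) (M : ddg_policy G) : R :=
  (pid_v1 M (dd_Cl G) (dd_Cw G) + pid_v2 M (dd_Cw G) (dd_Cl G)) / 2.

Definition pure_strat (G : DDG) (f : {set dd_A G} -> option (dd_A G))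
  : {set dd_A G} -> option (dd_A G) -> R :=
  fun T a => if a == f T then 1 else 0.

Definition pid_has_pure_eq (G : DDG) (M : ddg_policy G)
  (t1 t2 : dd_S G -> {set dd_A G}) : Prop :=
  exists f1 f2 : {set dd_A G} -> option (dd_A G),
    (forall g1, pid_U M agent1 t1 t2 (pure_strat g1) (pure_strat f2)
                <= pid_U M agent1 t1 t2 (pure_strat f1) (pure_strat f2)) /\
    (forall g2, pid_U M agent2 t1 t2 (pure_strat f1) (pure_strat g2)
                <= pid_U M agent2 t1 t2 (pure_strat f1) (pure_strat f2)).

Definition piddg_pure (G : DDG) (M : ddg_policy G) : Prop :=
  pid_has_pure_eq M (dd_Cw G) (dd_Cl G) /\ pid_has_pure_eq M (dd_Cl G) (dd_Cw G).

End Defs.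

(* Main.v *)
Require Import Defs.
From mathcomp Require Import all_boot all_order all_algebra.
From mathcomp Require Import classical_sets reals.
From mathcomp Require Import ring lra.
Set Implicit Arguments. Unset Strict Implicit. Unset Printing Implicit Defensive.
Import Order.TTheory GRing.Theory Num.Theory.
Local Open Scope ring_scope.
Local Open Scope classical_set_scope.

Section Gen.
Variable R : realType.

Lemma supinf_le (TO TI : Type) (O : set TO) (I : set TI) (f : TO -> TI -> R) (lo c : R) :
  (exists o, O o) -> (forall o i, O o -> I i -> lo <= f o i) ->
  (forall o, O o -> exists2 i, I i & f o i <= c) ->
  sup [set inf [set f o i | i in I] | o in O] <= c.
Proof.
move=> [o0 Oo0] Hlo Hc; apply: ge_sup.
  by exists (inf [set f o0 i | i in I]); exists o0.
move=> _ [o Oo <-]; have [i Ii le] := Hc o Oo.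
apply: le_trans le; apply: ge_inf; last by exists i.
by exists lo => _ [j Ij <-]; apply: Hlo.
Qed.

Lemma supinf_ge (TO TI : Type) (O : set TO) (I : set TI) (f : TO -> TI -> R) (lo hi c : R) o0 :
  (exists i, I i) -> (forall o i, O o -> I i -> lo <= f o i) ->
  (forall o i, O o -> I i -> f o i <= hi) -> O o0 ->
  (forall i, I i -> c <= f o0 i) ->
  c <= sup [set inf [set f o i | i in I] | o in O].
Proof.
move=> [i0 Ii0] Hlo Hhi Oo0 Hc.
apply: (@le_trans _ _ (inf [set f o0 i | i in I])).
  by apply: lb_le_inf; [exists (f o0 i0); exists i0 | move=> _ [i Ii <-]; apply: Hc].
apply: ub_le_sup; last by exists o0.
exists hi => _ [o Oo <-].
apply: (@le_trans _ _ (f o i0)); last exact: Hhi.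
apply: ge_inf; last by exists i0.
by exists lo => _ [j Ij <-]; apply: Hlo.
Qed.


Definition half (T : eqType) (b1 b2 : T) : T -> R :=
  fun t => ((t == b1)%:R + (t == b2)%:R) / 2.

Lemma sum_pure (T : finType) (b : T) (F : T -> R) :
  \sum_(t : T) (t == b)%:R * F t = F b.
Proof.
rewrite (bigD1 b) //= eqxx mul1r big1 ?addr0 // => t /negbTE ->; by rewrite mul0r.
Qed.

Lemma sum_half (T : finType) (b1 b2 : T) (F : T -> R) :
  \sum_(t : T) half b1 b2 t * F t = (F b1 + F b2) / 2.
Proof.
rewrite /half.
under eq_bigr => t _ do rewrite mulrAC mulrDl.
by rewrite -big_distrl /= big_split /= !sum_pure.
Qed.

Lemma half_mixed (T : finType) (av : pred T) b1 b2 :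
  av b1 -> av b2 -> mixed av (half b1 b2).
Proof.
move=> h1 h2; split; [|split].
- by move=> t; rewrite /half divr_ge0 // addr_ge0.
- move=> t ht; rewrite /half; have ->: (t == b1) = false.
    by apply/negbTE; apply: contraNneq ht => ->.
  have ->: (t == b2) = false by apply/negbTE; apply: contraNneq ht => ->.
  by rewrite addr0 mul0r.
- have := sum_half b1 b2 (fun _ => 1); under eq_bigr do rewrite mulr1.
  move=> ->; lra.
Qed.

Lemma mixed_le (T : finType) (av : pred T) x (h : T -> R) c :
  mixed av x -> (forall t, av t -> h t <= c) -> \sum_(t : T) x t * h t <= c.
Proof.
move=> [x0 [xav x1]] hc.
apply: (@le_trans _ _ (\sum_(t : T) x t * c)).
  apply: ler_sum => t _; case: (boolP (av t)) => hat.
    by apply: ler_wpM2l => //; apply: hc.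
  by rewrite xav // !mul0r.
by rewrite -big_distrl /= x1 mul1r.
Qed.

Lemma mixed_ge (T : finType) (av : pred T) x (h : T -> R) c :
  mixed av x -> (forall t, av t -> c <= h t) -> c <= \sum_(t : T) x t * h t.
Proof.
move=> [x0 [xav x1]] hc.
apply: (@le_trans _ _ (\sum_(t : T) x t * c)); last first.
  apply: ler_sum => t _; case: (boolP (av t)) => hat.
    by apply: ler_wpM2l => //; apply: hc.
  by rewrite xav // !mul0r.
by rewrite -big_distrl /= x1 mul1r.
Qed.

Lemma exp_pay_r (T1 T2 : finType) (g : T1 -> T2 -> R) x y :
  exp_pay g x y = \sum_(a : T1) x a * \sum_(b : T2) y b * g a b.
Proof.
rewrite /exp_pay; apply: eq_bigr => a _; rewrite big_distrr /=.
by apply: eq_bigr => b _; rewrite mulrA.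
Qed.

Lemma exp_pay_l (T1 T2 : finType) (g : T1 -> T2 -> R) x y :
  exp_pay g x y = \sum_(b : T2) y b * \sum_(a : T1) x a * g a b.
Proof.
rewrite /exp_pay exchange_big /=; apply: eq_bigr => b _; rewrite big_distrr /=.
by apply: eq_bigr => a _; rewrite mulrCA mulrA.
Qed.

Lemma exp_pay_bnd (T1 T2 : finType) (g : T1 -> T2 -> R) av1 av2 x y :
  (forall a b, 0 <= g a b <= 1) -> mixed av1 x -> mixed av2 y ->
  0 <= exp_pay g x y <= 1.
Proof.
move=> hg hx hy; rewrite exp_pay_r; apply/andP; split.
  apply: (mixed_ge hx) => a _; apply: (mixed_ge hy) => b _; by case/andP: (hg a b).
apply: (mixed_le hx) => a _; apply: (mixed_le hy) => b _; by case/andP: (hg a b).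
Qed.

Lemma mixed_ex (T : finType) (av : pred T) b : av b -> exists x, @mixed R T av x.
Proof. by move=> h; exists (half b b); apply: half_mixed. Qed.

Lemma value1_le (T1 T2 : finType) (g : T1 -> T2 -> R) (av1 : pred T1) (av2 : pred T2) a0 b1 b2 c :
  (forall a b, 0 <= g a b <= 1) -> av1 a0 -> av2 b1 -> av2 b2 ->
  (forall a, av1 a -> (g a b1 + g a b2) / 2 <= c) -> value1 g av1 av2 <= c.
Proof.
move=> hg h0 h1 h2 hc; apply: (@supinf_le _ _ _ _ (exp_pay g) 0).
- exact: mixed_ex h0.
- by move=> x y hx hy; case/andP: (exp_pay_bnd hg hx hy).
- move=> x hx; exists (half b1 b2); first exact: half_mixed.
  rewrite exp_pay_r; apply: (mixed_le hx) => a ha; rewrite sum_half; exact: hc.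
Qed.

Lemma value1_ge (T1 T2 : finType) (g : T1 -> T2 -> R) (av1 : pred T1) (av2 : pred T2) a b0 c :
  (forall a b, 0 <= g a b <= 1) -> av1 a -> av2 b0 ->
  (forall b, av2 b -> c <= g a b) -> c <= value1 g av1 av2.
Proof.
move=> hg ha hb hc; apply: (@supinf_ge _ _ _ _ (exp_pay g) 0 1 c (half a a)).
- exact: mixed_ex hb.
- by move=> x y hx hy; case/andP: (exp_pay_bnd hg hx hy).
- by move=> x y hx hy; case/andP: (exp_pay_bnd hg hx hy).
- exact: half_mixed.
- move=> y hy; rewrite exp_pay_l; apply: (mixed_ge hy) => b hb'.
  rewrite sum_half; have := hc b hb'; lra.
Qed.

Lemma value2_le (T1 T2 : finType) (g : T1 -> T2 -> R) (av1 : pred T1) (av2 : pred T2) b0 a1 a2 c :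
  (forall a b, 0 <= g a b <= 1) -> av2 b0 -> av1 a1 -> av1 a2 ->
  (forall b, av2 b -> (g a1 b + g a2 b) / 2 <= c) -> value2 g av1 av2 <= c.
Proof.
move=> hg h0 h1 h2 hc.
apply: (@supinf_le _ _ _ _ (fun y x => exp_pay g x y) 0).
- exact: mixed_ex h0.
- by move=> y x hy hx; case/andP: (exp_pay_bnd hg hx hy).
- move=> y hy; exists (half a1 a2); first exact: half_mixed.
  rewrite exp_pay_l; apply: (mixed_le hy) => b hb; rewrite sum_half; exact: hc.
Qed.

Lemma value2_ge (T1 T2 : finType) (g : T1 -> T2 -> R) (av1 : pred T1) (av2 : pred T2) b a0 c :
  (forall a b, 0 <= g a b <= 1) -> av2 b -> av1 a0 ->
  (forall a, av1 a -> c <= g a b) -> c <= value2 g av1 av2.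
Proof.
move=> hg hb ha hc.
apply: (@supinf_ge _ _ _ _ (fun y x => exp_pay g x y) 0 1 c (half b b)).
- exact: mixed_ex ha.
- by move=> y x hy hx; case/andP: (exp_pay_bnd hg hx hy).
- by move=> y x hy hx; case/andP: (exp_pay_bnd hg hx hy).
- exact: half_mixed.
- move=> x hx; rewrite exp_pay_r; apply: (mixed_ge hx) => a ha'.
  rewrite sum_half; have := hc a ha'; lra.
Qed.


Lemma sum_pure' (T : finType) (b : T) (F : T -> R) :
  \sum_(t : T) (if t == b then 1 else 0) * F t = F b.
Proof.
rewrite (bigD1 b) //= eqxx mul1r big1 ?addr0 // => t /negbTE ->; by rewrite mul0r.
Qed.

Section Pid.
Variable G : DDG R.
Variable M : ddg_policy G.
Hypothesis HM : is_policy M.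
Hypothesis HP : ddg_wf G.

Lemma pay_bnd i T1 T2 a1 a2 : 0 <= pid_pay M i T1 T2 a1 a2 <= 1.
Proof.
case: HM => hb _; rewrite /pid_pay.
case: (avail T1 a1); case: (avail T2 a2) => /=; rewrite ?hb //;
  case: (i == agent1) => //=; rewrite ?ler01 ?lexx //; apply/andP; split; lra.
Qed.

Lemma pay_sum T1 T2 a1 a2 :
  pid_pay M agent1 T1 T2 a1 a2 + pid_pay M agent2 T1 T2 a1 a2 = 1.
Proof.
case: HM => _ hs; rewrite /pid_pay.
case: (avail T1 a1); case: (avail T2 a2) => //=; rewrite ?hs //; lra.
Qed.

Lemma pidU_bnd i t1 t2 sg1 sg2 :
  pid_strategies sg1 -> pid_strategies sg2 -> 0 <= pid_U M i t1 t2 sg1 sg2 <= 1.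
Proof.
case: HP => P0 P1 h1 h2; rewrite /pid_U.
have hE s : 0 <= exp_pay (pid_pay M i (t1 s) (t2 s)) (sg1 (t1 s)) (sg2 (t2 s)) <= 1.
  by apply: exp_pay_bnd; [exact: pay_bnd | exact: h1 | exact: h2].
apply/andP; split.
  apply: sumr_ge0 => s _; apply: mulr_ge0 => //; by case/andP: (hE s).
rewrite -P1; apply: ler_sum => s _; rewrite -[leRHS]mulr1.
apply: ler_wpM2l => //; by case/andP: (hE s).
Qed.

Lemma strat_ex : exists sg, @pid_strategies R G sg.
Proof. by exists (fun _ => half None None) => T; apply: half_mixed. Qed.

Lemma pid_v1_le t1 t2 (k : {set dd_A R G} -> option (dd_A R G) * option (dd_A R G)) (c : dd_S R G -> R) :
  (forall s a1, (pid_pay M agent1 (t1 s) (t2 s) a1 (k (t2 s)).1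
               + pid_pay M agent1 (t1 s) (t2 s) a1 (k (t2 s)).2) / 2 <= c s) ->
  pid_v1 M t1 t2 <= \sum_s dd_P R G s * c s.
Proof.
move=> hc; apply: (@supinf_le _ _ _ _ (pid_U M agent1 t1 t2) 0).
- exact: strat_ex.
- by move=> x y hx hy; case/andP: (pidU_bnd agent1 t1 t2 hx hy).
- move=> sg1 h1; exists (fun T => half (k T).1 (k T).2).
    by move=> T; apply: half_mixed.
  case: HP => P0 _.
  apply: ler_sum => s _; apply: ler_wpM2l => //.
  rewrite -/(exp_pay _ _ _) exp_pay_r; apply: (mixed_le (h1 (t1 s))) => a _.
  by rewrite sum_half; apply: hc.
Qed.

Lemma pid_v2_le t1 t2 (k : {set dd_A R G} -> option (dd_A R G) * option (dd_A R G)) (c : dd_S R G -> R) :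
  (forall s a2, (pid_pay M agent2 (t1 s) (t2 s) (k (t1 s)).1 a2
               + pid_pay M agent2 (t1 s) (t2 s) (k (t1 s)).2 a2) / 2 <= c s) ->
  pid_v2 M t1 t2 <= \sum_s dd_P R G s * c s.
Proof.
move=> hc; apply: (@supinf_le _ _ _ _ (fun sg2 sg1 => pid_U M agent2 t1 t2 sg1 sg2) 0).
- exact: strat_ex.
- by move=> y x hy hx; case/andP: (pidU_bnd agent2 t1 t2 hx hy).
- move=> sg2 h2; exists (fun T => half (k T).1 (k T).2).
    by move=> T; apply: half_mixed.
  case: HP => P0 _.
  apply: ler_sum => s _; apply: ler_wpM2l => //.
  rewrite -/(exp_pay _ _ _) exp_pay_l; apply: (mixed_le (h2 (t2 s))) => a _.
  by rewrite sum_half; apply: hc.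
Qed.

Lemma pid_v1_ge t1 t2 (k : {set dd_A R G} -> option (dd_A R G)) (n : dd_S R G -> R) :
  (forall s a2, n s <= pid_pay M agent1 (t1 s) (t2 s) (k (t1 s)) a2) ->
  \sum_s dd_P R G s * n s <= pid_v1 M t1 t2.
Proof.
move=> hc; apply: (@supinf_ge _ _ _ _ (pid_U M agent1 t1 t2) 0 1 _ (fun T => half (k T) (k T))).
- exact: strat_ex.
- by move=> x y hx hy; case/andP: (pidU_bnd agent1 t1 t2 hx hy).
- by move=> x y hx hy; case/andP: (pidU_bnd agent1 t1 t2 hx hy).
- by move=> T; apply: half_mixed.
- move=> sg2 h2; case: HP => P0 _.
  apply: ler_sum => s _; apply: ler_wpM2l => //.
  rewrite -/(exp_pay _ _ _) exp_pay_l; apply: (mixed_ge (h2 (t2 s))) => a _.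
  rewrite sum_half; have := hc s a; lra.
Qed.

Lemma pid_v2_ge t1 t2 (k : {set dd_A R G} -> option (dd_A R G)) (n : dd_S R G -> R) :
  (forall s a1, n s <= pid_pay M agent2 (t1 s) (t2 s) a1 (k (t2 s))) ->
  \sum_s dd_P R G s * n s <= pid_v2 M t1 t2.
Proof.
move=> hc; apply: (@supinf_ge _ _ _ _ (fun sg2 sg1 => pid_U M agent2 t1 t2 sg1 sg2) 0 1 _ (fun T => half (k T) (k T))).
- exact: strat_ex.
- by move=> y x hy hx; case/andP: (pidU_bnd agent2 t1 t2 hx hy).
- by move=> y x hy hx; case/andP: (pidU_bnd agent2 t1 t2 hx hy).
- by move=> T; apply: half_mixed.
- move=> sg1 h1; case: HP => P0 _.
  apply: ler_sum => s _; apply: ler_wpM2l => //.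
  rewrite -/(exp_pay _ _ _) exp_pay_r; apply: (mixed_ge (h1 (t1 s))) => a _.
  rewrite sum_half; have := hc s a; lra.
Qed.

Lemma U_pure i t1 t2 f1 f2 :
  pid_U M i t1 t2 (pure_strat f1) (pure_strat f2) =
  \sum_s dd_P R G s * pid_pay M i (t1 s) (t2 s) (f1 (t1 s)) (f2 (t2 s)).
Proof.
apply: eq_bigr => s _; congr (_ * _).
rewrite -/(exp_pay _ _ _) exp_pay_r /pure_strat sum_pure'.
by rewrite sum_pure'.
Qed.

Lemma dev1 t1 t2 f1 f2 s0 a' :
  (forall s, s != s0 -> t1 s != t1 s0) -> 0 < dd_P R G s0 ->
  (forall g1, pid_U M agent1 t1 t2 (pure_strat g1) (pure_strat f2)
                <= pid_U M agent1 t1 t2 (pure_strat f1) (pure_strat f2)) ->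
  pid_pay M agent1 (t1 s0) (t2 s0) a' (f2 (t2 s0))
    <= pid_pay M agent1 (t1 s0) (t2 s0) (f1 (t1 s0)) (f2 (t2 s0)).
Proof.
move=> hd hp heq.
have := heq (fun T => if T == t1 s0 then a' else f1 T).
rewrite !U_pure (bigD1 s0) //= [X in _ <= X](bigD1 s0) //= eqxx.
rewrite (eq_bigr (fun s => dd_P R G s * pid_pay M agent1 (t1 s) (t2 s) (f1 (t1 s)) (f2 (t2 s)))).
  by rewrite lerD2r ler_pM2l.
by move=> s hs; rewrite (negbTE (hd s hs)).
Qed.

Lemma dev2 t1 t2 f1 f2 s0 b' :
  (forall s, s != s0 -> t2 s != t2 s0) -> 0 < dd_P R G s0 ->
  (forall g2, pid_U M agent2 t1 t2 (pure_strat f1) (pure_strat g2)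
                <= pid_U M agent2 t1 t2 (pure_strat f1) (pure_strat f2)) ->
  pid_pay M agent2 (t1 s0) (t2 s0) (f1 (t1 s0)) b'
    <= pid_pay M agent2 (t1 s0) (t2 s0) (f1 (t1 s0)) (f2 (t2 s0)).
Proof.
move=> hd hp heq.
have := heq (fun T => if T == t2 s0 then b' else f2 T).
rewrite !U_pure (bigD1 s0) //= [X in _ <= X](bigD1 s0) //= eqxx.
rewrite (eq_bigr (fun s => dd_P R G s * pid_pay M agent2 (t1 s) (t2 s) (f1 (t1 s)) (f2 (t2 s)))).
  by rewrite lerD2r ler_pM2l.
by move=> s hs; rewrite (negbTE (hd s hs)).
Qed.

Lemma pay_mono1 T1 T2 T1' T2' a a2 :
  avail T1 a -> avail T1' a -> (forall b, avail T2' b -> avail T2 b) ->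
  pid_pay M agent1 T1 T2 a a2 <= pid_pay M agent1 T1' T2' a a2.
Proof.
move=> h1 h1' h2; rewrite /pid_pay h1 h1' /=.
case E2': (avail T2' a2); first by rewrite (h2 _ E2').
case: (avail T2 a2) => /=; last by [].
by case: HM => hb _; case/andP: (hb agent1 (a) a2).
Qed.

Lemma pay_mono2 T1 T2 T1' T2' b a1 :
  avail T2 b -> avail T2' b -> (forall a, avail T1' a -> avail T1 a) ->
  pid_pay M agent2 T1 T2 a1 b <= pid_pay M agent2 T1' T2' a1 b.
Proof.
move=> h2 h2' h1; rewrite /pid_pay h2 h2' /= !andbT.
case E1': (avail T1' a1); first by rewrite (h1 _ E1').
case: (avail T1 a1) => /=; last by [].
by case: HM => hb _; case/andP: (hb agent2 a1 b).
Qed.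

Lemma unav1 T1 T2 a b :
  ~~ avail T1 a ->
  (forall b', pid_pay M agent2 T1 T2 a b' <= pid_pay M agent2 T1 T2 a b) ->
  pid_pay M agent1 T1 T2 a b <= 0.
Proof.
move=> ha hs; move: (hs None); rewrite /pid_pay (negbTE ha) /=.
by case: (avail T2 b) => /=; lra.
Qed.

Lemma unav2 T1 T2 a b :
  ~~ avail T2 b ->
  (forall a', pid_pay M agent1 T1 T2 a' b <= pid_pay M agent1 T1 T2 a b) ->
  pid_pay M agent2 T1 T2 a b <= 0.
Proof.
move=> hb hs; move: (hs None); rewrite /pid_pay (negbTE hb) /= !andbT.
by case: (avail T1 a) => /=; lra.
Qed.

End Pid.

Lemma sum_pair2 (T : finType) (F : 'I_2 * T -> R) :
  \sum_p F p = \sum_s (F (agent1, s) + F (agent2, s)).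
Proof.
rewrite (eq_bigr (fun p => F (p.1, p.2))); last by case.
rewrite -(pair_bigA _ (fun i s => F (i, s))) /= exchange_big /=.
apply: eq_bigr => s _; rewrite big_ord_recl big_ord1 /=.
by congr (F (_, _) + F (_, _)); apply: val_inj.
Qed.

Lemma a12 : (agent1 == agent2) = false. Proof. by []. Qed.
Lemma a21 : (agent2 == agent1) = false. Proof. by []. Qed.

Lemma ckddg_errE (G : DDG R) (M : ddg_policy G) :
  @ckddg_error R G M = \sum_s (dd_P R G s / 2) *
    (value2 (M agent2) (avail (dd_Cw R G s)) (avail (dd_Cl R G s))
     + value1 (M agent1) (avail (dd_Cl R G s)) (avail (dd_Cw R G s))).
Proof.
rewrite /ckddg_error /ckdg_error sum_pair2; apply: eq_bigr => s _ /=.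
rewrite ler10 ler01 subr0 sub0r normrN normr1 !mul1r /ckdg_w1 /ckdg_w2 /=.
by rewrite mulrDr.
Qed.

Definition x1 : 'I_4 := @Ordinal 4 0 erefl.
Definition x2 : 'I_4 := @Ordinal 4 1 erefl.
Definition yy : 'I_4 := @Ordinal 4 2 erefl.
Definition zz : 'I_4 := @Ordinal 4 3 erefl.

Definition beats (a b : 'I_4) : bool :=
  match nat_of_ord a, nat_of_ord b with
  | 0, 3 | 1, 2 | 2, 0 | 3, 1 => true | _, _ => false end.

Definition mm (a b : option 'I_4) : R :=
  match a, b with
  | Some _, None => 1
  | Some a, Some b => if beats a b then 1 else 0
  | None, _ => 0 end.

Definition Mex : 'I_2 -> option 'I_4 -> option 'I_4 -> R :=
  fun i a b => if i == agent1 then mm a b else 1 - mm a b.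

Definition Cw (s : 'I_3) : {set 'I_4} :=
  match nat_of_ord s with 0 => [set a : 'I_4 | nat_of_ord a \in [:: 0; 1]%N]
  | 1 => [set a : 'I_4 | nat_of_ord a == 2%N] | _ => [set a : 'I_4 | nat_of_ord a == 3%N] end.
Definition Cl (s : 'I_3) : {set 'I_4} :=
  match nat_of_ord s with 0 => [set a : 'I_4 | nat_of_ord a \in [:: 2; 3]%N]
  | 1 => [set a : 'I_4 | nat_of_ord a == 0%N] | _ => [set a : 'I_4 | nat_of_ord a == 1%N] end.

Definition Gex : DDG R := @mkDDG R 'I_4 'I_3 (fun _ => 1/3) Cw Cl.

Lemma Mex_policy : is_policy Mex.
Proof.
split.
  move=> i a b; rewrite /Mex; case: (i == agent1);
  rewrite /mm; case: a => [a|]; case: b => [b|] //=; rewrite ?ler01 ?lexx //;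
  try case: ifP => _; rewrite ?subr0 ?subrr ?ler01 ?lexx //.
by move=> a b; rewrite /Mex /=; lra.
Qed.

Lemma Gex_wf : ddg_wf Gex.
Proof.
split => //= [t|]; first lra.
by rewrite sumr_const card_ord; lra.
Qed.

Lemma M1E a b : Mex agent1 a b = mm a b. Proof. by rewrite /Mex eqxx. Qed.
Lemma M2E a b : Mex agent2 a b = 1 - mm a b. Proof. by rewrite /Mex. Qed.

Ltac evalg := case=> [[[|[|[|[|?]]]] ?]|] //=; rewrite ?inE //= ?M1E ?M2E /mm /= => _; try lra.

Section Sad.
Variables (A1 A2 : finType) (M : 'I_2 -> option A1 -> option A2 -> R).
Hypothesis HM : is_policy M.

Lemma Mb i a b : 0 <= M i a b <= 1. Proof. by case: HM. Qed.
Lemma Ms a b : M agent2 a b = 1 - M agent1 a b.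
Proof. case: HM => _ h; have := h a b; lra. Qed.

Lemma lb1 (C1 C1' : {set A1}) (C2 C2' : {set A2}) a b :
  avail C1' a -> (forall b', avail C2' b' -> avail C2 b') ->
  (forall b', avail C2 b' -> M agent2 a b' <= M agent2 a b) ->
  M agent1 a b <= value1 (M agent1) (avail C1') (avail C2').
Proof.
move=> ha hinc hs; apply: (@value1_ge _ _ _ _ _ a None) => //.
  by move=> ??; apply: Mb.
move=> b' hb'; have := hs b' (hinc _ hb'); rewrite !Ms; lra.
Qed.

Lemma lb2 (C1 C1' : {set A1}) (C2 C2' : {set A2}) a b :
  avail C2' b -> (forall a', avail C1' a' -> avail C1 a') ->
  (forall a', avail C1 a' -> M agent1 a' b <= M agent1 a b) ->
  M agent2 a b <= value2 (M agent2) (avail C1') (avail C2').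
Proof.
move=> hb hinc hs; apply: (@value2_ge _ _ _ _ _ b None) => //.
  by move=> ??; apply: Mb.
move=> a' ha'; have := hs a' (hinc _ ha'); rewrite !Ms; lra.
Qed.

Lemma v1_ge0 (C1 : {set A1}) (C2 : {set A2}) : 0 <= value1 (M agent1) (avail C1) (avail C2).
Proof.
apply: (@value1_ge _ _ _ _ _ None None) => //; first by move=> ??; apply: Mb.
by move=> b ?; case/andP: (Mb agent1 None b).
Qed.

Lemma v2_ge0 (C1 : {set A1}) (C2 : {set A2}) : 0 <= value2 (M agent2) (avail C1) (avail C2).
Proof.
apply: (@value2_ge _ _ _ _ _ None None) => //; first by move=> ??; apply: Mb.
by move=> a ?; case/andP: (Mb agent2 a None).
Qed.

End Sad.

Lemma sum3 (F : 'I_3 -> R) : \sum_s F s = F 0 + F 1 + F 2%:R.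
Proof.
rewrite !big_ord_recl big_ord0 addr0 addrA.
by congr (F _ + F _ + F _); apply: val_inj.
Qed.

Lemma ck_upper : @ckddg_error R Gex Mex < 1/3.
Proof.
rewrite ckddg_errE sum3 /=.
have hb : forall i a b, 0 <= Mex i a b <= 1 by case: Mex_policy.
have h1 : value2 (Mex agent2) (avail (Cw 0)) (avail (Cl 0)) <= 1/2.
  apply: (@value2_le _ _ _ _ _ None (Some x1) (Some x2)) => //;
    try by rewrite /= inE.
  evalg.
have h2 : value1 (Mex agent1) (avail (Cl 0)) (avail (Cw 0)) <= 1/2.
  apply: (@value1_le _ _ _ _ _ None (Some x1) (Some x2)) => //;
    try by rewrite /= inE.
  evalg.
have h3 : value2 (Mex agent2) (avail (Cw 1)) (avail (Cl 1)) <= 0.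
  apply: (@value2_le _ _ _ _ _ None (Some yy) (Some yy)) => //;
    try by rewrite /= inE.
  evalg.
have h4 : value1 (Mex agent1) (avail (Cl 1)) (avail (Cw 1)) <= 0.
  apply: (@value1_le _ _ _ _ _ None (Some yy) (Some yy)) => //;
    try by rewrite /= inE.
  evalg.
have h5 : value2 (Mex agent2) (avail (Cw 2%:R)) (avail (Cl 2%:R)) <= 0.
  apply: (@value2_le _ _ _ _ _ None (Some zz) (Some zz)) => //;
    try by rewrite /= inE.
  evalg.
have h6 : value1 (Mex agent1) (avail (Cl 2%:R)) (avail (Cw 2%:R)) <= 0.
  apply: (@value1_le _ _ _ _ _ None (Some zz) (Some zz)) => //;
    try by rewrite /= inE.
  evalg.
move: h1 h2 h3 h4 h5 h6.
set v1 := value2 _ _ _; set v2 := value1 _ _ _; set v3 := value2 _ _ _;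
set v4 := value1 _ _ _; set v5 := value2 _ _ _; set v6 := value1 _ _ _.
move=> *; lra.
Qed.

Lemma ck_lower (M : ddg_policy Gex) : is_policy M -> @ckddg_pure R Gex M ->
  1/3 <= @ckddg_error R Gex M.
Proof.
move=> HM hp.
have [a [b [ha hb hs1 hs2]]] := hp (agent1, 0).
have [a' [b' [ha' hb' hs1' hs2']]] := hp (agent2, 0).
move: ha hb hs1 hs2 ha' hb' hs1' hs2' => /= ha hb hs1 hs2 ha' hb' hs1' hs2'.
rewrite ckddg_errE sum3 /=.
have e1 : M agent2 a b <= value2 (M agent2) (avail (Cw 0)) (avail (Cl 0)).
  by apply: (@lb2 _ _ M HM (Cw 0) (Cw 0) (Cl 0) (Cl 0) a b hb) => // a1 h1; exact: hs1.
have e2 : M agent1 a' b' <= value1 (M agent1) (avail (Cl 0)) (avail (Cw 0)).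
  by apply: (@lb1 _ _ M HM (Cl 0) (Cl 0) (Cw 0) (Cw 0) a' b' ha') => // b1 h1; exact: hs2'.
have e3 : forall a, avail (Cw 0) a ->
    (forall b0, avail (Cl 0) b0 -> M agent2 a b0 <= M agent2 a b) ->
    M agent1 a b <= value1 (M agent1) (avail (Cl 1)) (avail (Cw 1))
                        + value1 (M agent1) (avail (Cl 2%:R)) (avail (Cw 2%:R)).
  move=> {e1 e2 hs1 ha hs2} a ha hs2.
  move: ha; case: a hs2 => [a|] hs2 ha.
    move: ha; rewrite /= inE; case: a hs2 => [[|[|?]] ?] hs2 //= _.
    + rewrite -[leLHS]addr0; apply: lerD; last exact: v1_ge0.
      apply: (@lb1 _ _ M HM (Cl 1) (Cl 1) (Cl 0) (Cw 1)) => //; first by rewrite /= inE.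
      by case=> [c|] //; rewrite /= !inE => /eqP ->.
    + rewrite -[leLHS]add0r; apply: lerD; first exact: v1_ge0.
      apply: (@lb1 _ _ M HM (Cl 1) (Cl 2%:R) (Cl 0) (Cw 2%:R)) => //; first by rewrite /= inE.
      by case=> [c|] //; rewrite /= !inE => /eqP ->.
  rewrite -[leLHS]addr0; apply: lerD; last exact: v1_ge0.
  apply: (@lb1 _ _ M HM (Cl 1) (Cl 1) (Cl 0) (Cw 1)) => //.
  by case=> [c|] //; rewrite /= !inE => /eqP ->.
have e4 : forall b', avail (Cw 0) b' ->
    (forall a0, avail (Cl 0) a0 -> M agent1 a0 b' <= M agent1 a' b') ->
    M agent2 a' b' <= value2 (M agent2) (avail (Cw 1)) (avail (Cl 1))
                        + value2 (M agent2) (avail (Cw 2%:R)) (avail (Cl 2%:R)).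
  move=> {e1 e2 e3 hs1' hb' hs2'} b' hb' hs1'.
  move: hb'; case: b' hs1' => [b'|] hs1' hb'.
    move: hb'; rewrite /= inE; case: b' hs1' => [[|[|?]] ?] hs1' //= _.
    + rewrite -[leLHS]addr0; apply: lerD; last exact: v2_ge0.
      apply: (@lb2 _ _ M HM (Cl 0) (Cw 1) (Cl 1) (Cl 1)) => //; first by rewrite /= inE.
      by case=> [c|] //; rewrite /= !inE => /eqP ->.
    + rewrite -[leLHS]add0r; apply: lerD; first exact: v2_ge0.
      apply: (@lb2 _ _ M HM (Cl 0) (Cw 2%:R) (Cl 1) (Cl 2%:R)) => //; first by rewrite /= inE.
      by case=> [c|] //; rewrite /= !inE => /eqP ->.
  rewrite -[leLHS]addr0; apply: lerD; last exact: v2_ge0.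
  apply: (@lb2 _ _ M HM (Cl 0) (Cw 1) (Cl 1) (Cl 1)) => //.
  by case=> [c|] //; rewrite /= !inE => /eqP ->.
have := Ms HM a b; have := Ms HM a' b'.
move: e1 e2 (e3 a ha hs2) (e4 b' hb' hs1').
set v1 := value2 _ _ _; set v2 := value1 _ _ _; set v3 := value1 _ _ _;
set v4 := value1 _ _ _; set v5 := value2 _ _ _; set v6 := value2 _ _ _.
move=> *; lra.
Qed.

Lemma Cw_neq0 (s : 'I_3) : s != 0 -> Cw s != Cw 0.
Proof.
rewrite -(inj_eq val_inj) /=; case: s => [[|[|[|?]]] ?] //= _;
  apply/eqP => /setP; [move/(_ yy) | move/(_ zz)]; rewrite !inE /=; by rewrite eqxx.
Qed.

Lemma Cl_neq0 (s : 'I_3) : s != 0 -> Cl s != Cl 0.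
Proof.
rewrite -(inj_eq val_inj) /=; case: s => [[|[|[|?]]] ?] //= _;
  apply/eqP => /setP; [move/(_ x1) | move/(_ x2)]; rewrite !inE /=; by rewrite eqxx.
Qed.

Definition kk (T : {set 'I_4}) : option 'I_4 * option 'I_4 :=
  if x1 \in T then (Some x1, Some x2) else if yy \in T then (Some yy, Some yy)
  else (Some zz, Some zz).

Ltac evalp := case=> [[[|[|[|[|?]]]] ?]|] //=; rewrite /pid_pay /= ?inE //= ?M1E ?M2E /mm /=; try lra.

Lemma pid_upper : @piddg_error R Gex Mex < 1/3.
Proof.
rewrite /piddg_error /=.
have HP := Gex_wf; have HM := Mex_policy.
have h1 : @pid_v1 R Gex Mex Cl Cw <= \sum_(s : 'I_3) (1/3) * (if nat_of_ord s == 0%N then 1/2 else 0).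
  apply: (@pid_v1_le Gex Mex HM HP Cl Cw kk (fun s => if nat_of_ord s == 0%N then 1/2 else 0)) => s.
  case: s => [[|[|[|?]]] ?] //=; rewrite /kk !inE /=; evalp.
have h2 : @pid_v2 R Gex Mex Cw Cl <= \sum_(s : 'I_3) (1/3) * (if nat_of_ord s == 0%N then 1/2 else 0).
  apply: (@pid_v2_le Gex Mex HM HP Cw Cl kk (fun s => if nat_of_ord s == 0%N then 1/2 else 0)) => s.
  case: s => [[|[|[|?]]] ?] //=; rewrite /kk !inE /=; evalp.
move: h1 h2; rewrite sum3 /=; lra.
Qed.

Lemma all3 (P : 'I_3 -> Prop) : P 0 -> P 1 -> P 2%:R -> forall s, P s.
Proof.
move=> h0 h1 h2 [[|[|[|?]]] hs] //.
- by have -> : Ordinal hs = 0 by apply: val_inj.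
- by have -> : Ordinal hs = 1 by apply: val_inj.
- by have -> : Ordinal hs = 2%:R by apply: val_inj.
Qed.

Lemma o10 : ((1 : 'I_3) == 0) = false. Proof. by []. Qed.
Lemma o20 : ((2%:R : 'I_3) == 0) = false. Proof. by []. Qed.
Lemma o21 : ((2%:R : 'I_3) == 1) = false. Proof. by []. Qed.

Lemma I1 x : avail (Cl 1) x -> avail (Cw 0) x.
Proof. by case: x => [[[|[|[|[|?]]]] ?]|] //=; rewrite !inE. Qed.
Lemma I2 x : avail (Cl 2%:R) x -> avail (Cw 0) x.
Proof. by case: x => [[[|[|[|[|?]]]] ?]|] //=; rewrite !inE. Qed.
Lemma I3 x : avail (Cw 1) x -> avail (Cl 0) x.
Proof. by case: x => [[[|[|[|[|?]]]] ?]|] //=; rewrite !inE. Qed.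
Lemma I4 x : avail (Cw 2%:R) x -> avail (Cl 0) x.
Proof. by case: x => [[[|[|[|[|?]]]] ?]|] //=; rewrite !inE. Qed.
Lemma I5 x : avail (Cw 0) x -> avail (Cl 1) x || avail (Cl 2%:R) x.
Proof. by case: x => [[[|[|[|[|?]]]] ?]|] //=; rewrite !inE. Qed.
Lemma Y0 : (yy \in Cl 0) = true. Proof. by rewrite inE. Qed.
Lemma Y1 : (yy \in Cl 1) = false. Proof. by rewrite inE. Qed.
Lemma Y2 : (yy \in Cl 2%:R) = false. Proof. by rewrite inE. Qed.

Lemma pid_lower (M : ddg_policy Gex) : is_policy M -> @piddg_pure R Gex M ->
  1/3 <= @piddg_error R Gex M.
Proof.
move=> HM [[f1 [f2 [q1 q2]]] [h1 [h2 [r1 r2]]]].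
have HP := Gex_wf.
have P0 : 0 < dd_P R Gex 0 by rewrite /=; lra.
set a := f1 (Cw 0); set b := f2 (Cl 0).
set a' := h1 (Cl 0); set b' := h2 (Cw 0).
have S1 := fun a0 => @dev1 Gex M Cw Cl f1 f2 0 a0 Cw_neq0 P0 q1.
have S2 := fun b0 => @dev2 Gex M Cw Cl f1 f2 0 b0 Cl_neq0 P0 q2.
have S1' := fun a0 => @dev1 Gex M Cl Cw h1 h2 0 a0 Cl_neq0 P0 r1.
have S2' := fun b0 => @dev2 Gex M Cl Cw h1 h2 0 b0 Cw_neq0 P0 r2.
rewrite -/a -/b in S1 S2; rewrite -/a' -/b' in S1' S2'.
set v := pid_pay M agent1 (Cw 0) (Cl 0) a b.
set v' := pid_pay M agent1 (Cl 0) (Cw 0) a' b'.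
have bnd := pay_bnd HM; have sm := pay_sum HM.
pose n1 := if avail (Cl 1) a then v else 0.
pose n2 := if avail (Cl 2%:R) a then v else 0.
pose k1 := fun T : {set 'I_4} => if yy \in T then a' else a.
have L1 : (1/3) * v' + (1/3) * n1 + (1/3) * n2 <= @pid_v1 R Gex M Cl Cw.
  have := @pid_v1_ge Gex M HM HP Cl Cw k1 (fun s => if s == 0 then v' else if s == 1 then n1 else n2).
  rewrite sum3 /=; apply; apply: all3 => a2; rewrite ?eqxx ?o10 ?o20 ?o21 /k1.
  - rewrite Y0; have := S2' a2; have := sm (Cl 0) (Cw 0) a' a2; have := sm (Cl 0) (Cw 0) a' b'.
    rewrite -/v'; lra.
  - rewrite Y1 /n1; case: ifP => ha; last by case/andP: (bnd agent1 (Cl 1) (Cw 1) a a2).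
    apply: le_trans (pay_mono1 HM a2 (I1 ha) ha I3).
    have := S2 a2; have := sm (Cw 0) (Cl 0) a a2; have := sm (Cw 0) (Cl 0) a b; rewrite -/v; lra.
  - rewrite Y2 /n2; case: ifP => ha; last by case/andP: (bnd agent1 (Cl 2%:R) (Cw 2%:R) a a2).
    apply: le_trans (pay_mono1 HM a2 (I2 ha) ha I4).
    have := S2 a2; have := sm (Cw 0) (Cl 0) a a2; have := sm (Cw 0) (Cl 0) a b; rewrite -/v; lra.
have N12 : v <= n1 + n2.
  have v0 : 0 <= v by case/andP: (bnd agent1 (Cw 0) (Cl 0) a b).
  rewrite /n1 /n2; case: ifP => c1; case: ifP => c2; try lra.
  rewrite addr0; apply: (unav1 _ S2); apply/negP => /I5; by rewrite c1 c2.
pose m1 := if avail (Cl 1) b' then 1 - v' else 0.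
pose m2 := if avail (Cl 2%:R) b' then 1 - v' else 0.
pose k2 := fun T : {set 'I_4} => if yy \in T then b else b'.
have L2 : (1/3) * (1 - v) + (1/3) * m1 + (1/3) * m2 <= @pid_v2 R Gex M Cw Cl.
  have := @pid_v2_ge Gex M HM HP Cw Cl k2 (fun s => if s == 0 then 1 - v else if s == 1 then m1 else m2).
  rewrite sum3 /=; apply; apply: all3 => a1; rewrite ?eqxx ?o10 ?o20 ?o21 /k2.
  - rewrite Y0; have := S1 a1; have := sm (Cw 0) (Cl 0) a1 b; have := sm (Cw 0) (Cl 0) a b.
    rewrite -/v; lra.
  - rewrite Y1 /m1; case: ifP => hb; last by case/andP: (bnd agent2 (Cw 1) (Cl 1) a1 b').
    apply: le_trans (pay_mono2 HM a1 (I1 hb) hb I3).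
    have := S1' a1; have := sm (Cl 0) (Cw 0) a1 b'; have := sm (Cl 0) (Cw 0) a' b'; rewrite -/v'; lra.
  - rewrite Y2 /m2; case: ifP => hb; last by case/andP: (bnd agent2 (Cw 2%:R) (Cl 2%:R) a1 b').
    apply: le_trans (pay_mono2 HM a1 (I2 hb) hb I4).
    have := S1' a1; have := sm (Cl 0) (Cw 0) a1 b'; have := sm (Cl 0) (Cw 0) a' b'; rewrite -/v'; lra.
have M12 : 1 - v' <= m1 + m2.
  have v1 : v' <= 1 by case/andP: (bnd agent1 (Cl 0) (Cw 0) a' b').
  rewrite /m1 /m2; case: ifP => c1; case: ifP => c2; try lra.
  rewrite addr0.
  have nb : ~~ avail (Cw 0) b' by apply/negP => /I5; rewrite c1 c2.
  have := @unav2 Gex M (Cl 0) (Cw 0) a' b' nb S1'; have := sm (Cl 0) (Cw 0) a' b'; rewrite -/v'; lra.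
rewrite /piddg_error /=.
move: L1 L2 N12 M12.
set w1 := pid_v1 _ _ _; set w2 := pid_v2 _ _ _.
move=> *; lra.
Qed.

End Gen.

Theorem proposition3p7 (R : realType) :
  [/\ exists G : CKDG R, ckdg_wf G /\
        min_err_strictly_below_pure (@is_policy R _ _) (@ckdg_pure R G) (@ckdg_error R G),
      exists G : DDG R, ddg_wf G /\
        min_err_strictly_below_pure (@is_policy R _ _) (@ckddg_pure R G) (@ckddg_error R G)
    & exists G : DDG R, ddg_wf G /\
        min_err_strictly_below_pure (@is_policy R _ _) (@piddg_pure R G) (@piddg_error R G)].
Proof.
split.
- exists (ckddg_induced (Gex R)); split.
    split => [p|] /=; first lra.
    by rewrite sumr_const card_prod !card_ord -mulr_natr; lra.
  exists (Mex R); split; first exact: Mex_policy.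
  exists (1/3); split; first exact: ck_upper.
  by move=> M' HM hp; apply: ck_lower.
- exists (Gex R); split; first exact: Gex_wf.
  exists (Mex R); split; first exact: Mex_policy.
  exists (1/3); split; first exact: ck_upper.
  by move=> M' HM hp; apply: ck_lower.
- exists (Gex R); split; first exact: Gex_wf.
  exists (Mex R); split; first exact: Mex_policy.
  exists (1/3); split; first exact: pid_upper.
  by move=> M' HM hp; apply: pid_lower.
Qed.
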